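(* Let $(X,d)$ be a compact metric space and $F:X\to 2^X$ a continuous, onto set-valued map. Then $F$ has the shadowing property if and only if the set-valued map $F_{inv}$ on $(\mathrm{Orb}_{inv}(X),\rho)$ has the shadowing property.
   Context: $X$ has diameter $1$; $2^X$ is the family of nonempty compact subsets of $X$. $F$ is upper semicontinuous if for every $x$ and open $U\supset F(x)$ there is a neighborhood $V$ of $x$ with $F(y)\subset U$ for $y\in V$; lower semicontinuous if for every $x$ and open $U$ with $F(x)\cap U\ne\emptyset$ there is a neighborhood $V$ of $x$ with $F(y)\cap U\neq\emptyset$ for $y\in V$; continuous if both. $F$ is onto if every $y$ lies in some $F(x)$. $\mathrm{Orb}_{inv}(X)=\{(x_0,x_1,\dots)\in X^{\mathbb N}: x_n\in F(x_{n+1})\ \forall n\}$ with metric $\rho((x_n),(y_n))=\sum_{n\ge0}d(x_n,y_n)/2^{n+1}$; $F_{inv}:\mathrm{Orb}_{inv}(X)\to 2^{\mathrm{Orb}_{inv}(X)}$, $F_{inv}((x_0,x_1,\dots))=\{(y,x_0,x_1,\dots): y\in F(x_0)\}$. For a set-valued map $G$ on a metric space $(Z,e)$: a $\delta$-pseudo-orbit is $\{z_n\}_{n\ge0}$ with $e(z_{n+1},G(z_n))<\delta$ for all $n$; a $G$-orbit is $(w_n)$ with $w_{n+1}\in G(w_n)$; $G$ has the shadowing property if for every $\varepsilon>0$ there is $\delta>0$ such that every $\delta$-pseudo-orbit $\{z_n\}$ admits a $G$-orbit $(w_n)$ with $e(z_n,w_n)<\varepsilon$ for all $n$. *)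

(* Defs.v *)
From Stdlib Require Import Reals List.
From Coquelicot Require Import Coquelicot.
Open Scope R_scope.

Definition is_metric {X : Type} (d : X -> X -> R) : Prop :=
  (forall x y, 0 <= d x y) /\
  (forall x y, d x y = 0 <-> x = y) /\
  (forall x y, d x y = d y x) /\
  (forall x y z, d x z <= d x y + d y z).

(** [X] has diameter 1 (standing assumption of the paper). *)
Definition diameter_one {X : Type} (d : X -> X -> R) : Prop :=
  is_lub (fun r => exists x y, r = d x y) 1.

Definition mopen {X : Type} (d : X -> X -> R) (U : X -> Prop) : Prop :=
  forall x, U x -> exists eps, 0 < eps /\ forall y, d x y < eps -> U y.

Definition mcompact {X : Type} (d : X -> X -> R) (A : X -> Prop) : Prop :=
  forall (I : Type) (U : I -> X -> Prop),
    (forall i, mopen d (U i)) ->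
    (forall x, A x -> exists i, U i x) ->
    exists l : list I, forall x, A x -> exists i, In i l /\ U i x.

Definition compact_space {X : Type} (d : X -> X -> R) : Prop :=
  mcompact d (fun _ => True).

(** set-valued maps are represented as [F : X -> X -> Prop], [F x] being the
    set F(x).  F takes values in 2^X: nonempty compact subsets. *)
Definition values_in_2X {X : Type} (d : X -> X -> R) (F : X -> X -> Prop) : Prop :=
  forall x, (exists y, F x y) /\ mcompact d (F x).

Definition usc {X : Type} (d : X -> X -> R) (F : X -> X -> Prop) : Prop :=
  forall x (U : X -> Prop), mopen d U -> (forall y, F x y -> U y) ->
    exists eps, 0 < eps /\
      forall x', d x x' < eps -> forall y, F x' y -> U y.

Definition lsc {X : Type} (d : X -> X -> R) (F : X -> X -> Prop) : Prop :=
  forall x (U : X -> Prop), mopen d U -> (exists y, F x y /\ U y) ->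
    exists eps, 0 < eps /\
      forall x', d x x' < eps -> exists y, F x' y /\ U y.

Definition sv_continuous {X : Type} (d : X -> X -> R) (F : X -> X -> Prop) : Prop :=
  usc d F /\ lsc d F.

Definition sv_onto {X : Type} (F : X -> X -> Prop) : Prop :=
  forall y, exists x, F x y.

(** e(z, G(w)) < delta, i.e. inf_{a in G w} e z a < delta, unfolded. *)
Definition dist_set_lt {Z : Type} (e : Z -> Z -> R) (z : Z) (A : Z -> Prop)
  (delta : R) : Prop :=
  exists a, A a /\ e z a < delta.

Definition pseudo_orbit {Z : Type} (e : Z -> Z -> R) (G : Z -> Z -> Prop)
  (delta : R) (z : nat -> Z) : Prop :=
  forall n, dist_set_lt e (z (S n)) (G (z n)) delta.

Definition sv_orbit {Z : Type} (G : Z -> Z -> Prop) (w : nat -> Z) : Prop :=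
  forall n, G (w n) (w (S n)).

Definition shadowing {Z : Type} (e : Z -> Z -> R) (G : Z -> Z -> Prop) : Prop :=
  forall eps, 0 < eps -> exists delta, 0 < delta /\
    forall z : nat -> Z, pseudo_orbit e G delta z ->
      exists w : nat -> Z, sv_orbit G w /\ forall n, e (z n) (w n) < eps.

Definition Orb_inv {X : Type} (F : X -> X -> Prop) : Type :=
  { x : nat -> X | forall n, F (x (S n)) (x n) }.

Definition rho {X : Type} (d : X -> X -> R) (F : X -> X -> Prop)
  (x y : Orb_inv F) : R :=
  Series (fun n => d (proj1_sig x n) (proj1_sig y n) / 2 ^ (S n)).

Definition F_inv {X : Type} (F : X -> X -> Prop) (x w : Orb_inv F) : Prop :=
  F (proj1_sig x 0%nat) (proj1_sig w 0%nat) /\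
  forall n, proj1_sig w (S n) = proj1_sig x n.

(* Main.v *)
Require Import Defs.
From Stdlib Require Import Reals Lra Lia IndefiniteDescription Classical List.
From Coquelicot Require Import Coquelicot.
From Coquelicot Require Import Coquelicot.
Open Scope R_scope.

Lemma pow2_pos n : 0 < 2 ^ n.
Proof. apply pow_lt; lra. Qed.

Lemma inv_pow2_S n : / 2 ^ S n = / 2 * / 2 ^ n.
Proof. simpl. rewrite Rinv_mult. reflexivity. Qed.

Lemma inv_pow2_eq n : / 2 ^ n = (/ 2) ^ n.
Proof. rewrite pow_inv. reflexivity. Qed.

Lemma ex_geom_half : ex_series (fun n => (/2) ^ n).
Proof. exists (/ (1 - /2)). apply is_series_geom. rewrite Rabs_pos_eq; lra. Qed.

Lemma Series_half_S : Series (fun k => / 2 ^ S k) = 1.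
Proof.
  rewrite (Series_ext _ (fun k => /2 * (/2)^k)).
  2:{ intro k. rewrite inv_pow2_S, inv_pow2_eq. reflexivity. }
  rewrite Series_scal_l, Series_geom. field. rewrite Rabs_pos_eq; lra.
Qed.

Lemma ex_half_S : ex_series (fun k => / 2 ^ S k).
Proof.
  apply (ex_series_ext (fun k => (/2)^k * /2)).
  { intro k. cbv beta. rewrite inv_pow2_S, inv_pow2_eq. apply Rmult_comm. }
  apply ex_series_scal_r. apply ex_geom_half.
Qed.

Section Ser.
Variable a : nat -> R.
Hypothesis Ha : forall n, 0 <= a n <= 1.
Let t n := a n / 2 ^ S n.

Lemma t_bounds n : 0 <= t n <= / 2 ^ S n.
Proof.
  unfold t. pose proof (pow2_pos (S n)). destruct (Ha n). split.
  - apply Rdiv_le_0_compat; lra.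
  - unfold Rdiv. rewrite <- (Rmult_1_l (/ 2 ^ S n)) at 2.
    apply Rmult_le_compat_r; [left; apply Rinv_0_lt_compat|]; lra.
Qed.

Lemma ex_t : ex_series t.
Proof.
  apply (@ex_series_le R_AbsRing R_CompleteNormedModule _ (fun n => / 2 ^ S n)).
  - intro n. destruct (t_bounds n). change (Rabs (t n) <= / 2 ^ S n).
    rewrite Rabs_pos_eq; lra.
  - apply ex_half_S.
Qed.

Lemma sum_ge_term (b : nat -> R) j : (forall n, 0 <= b n) -> b j <= sum_f_R0 b j.
Proof.
  intro H. destruct j; simpl. lra. pose proof (cond_pos_sum b j H). lra.
Qed.

Lemma Series_nonneg (b : nat -> R) : (forall n, 0 <= b n) -> ex_series b -> 0 <= Series b.
Proof.
  intros H E.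
  replace 0 with (Series (fun _ => 0)).
  - apply Series_le; auto. intro; split; [lra| apply H].
  - rewrite (Series_ext _ (fun n => 0 * (/2)^n)) by (intro; ring).
    rewrite Series_scal_l. ring.
Qed.

Lemma R1 j : a j / 2 ^ S j <= Series t.
Proof.
  rewrite (Series_incr_n t (S j)) by (lia || apply ex_t). simpl Init.Nat.pred.
  pose proof (sum_ge_term t j (fun n => proj1 (t_bounds n))).
  assert (0 <= Series (fun k => t (S j + k)%nat)).
  { apply Series_nonneg. intro; apply t_bounds.
    apply (proj1 (ex_series_incr_n t (S j))). apply ex_t. }
  unfold t at 1 in H. lra.
Qed.

Lemma sum_geo_eta (eta : R) N : sum_f_R0 (fun j => eta / 2 ^ S j) N = eta * (1 - / 2 ^ S N).
Proof.
  induction N.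
  - simpl. field.
  - rewrite tech5, IHN. change (2 ^ S (S N)) with (2 * 2 ^ S N).
    pose proof (pow2_pos (S N)). field. lra.
Qed.

Lemma R2 eta N : 0 <= eta -> (forall j, (j <= N)%nat -> a j <= eta) ->
  Series t <= eta + / 2 ^ S N.
Proof.
  intros He Hj.
  rewrite (Series_incr_n t (S N)) by (lia || apply ex_t). simpl Init.Nat.pred.
  assert (sum_f_R0 t N <= eta).
  { eapply Rle_trans. apply (sum_Rle t (fun j => eta / 2 ^ S j)).
    - intros n Hn. unfold t. unfold Rdiv. apply Rmult_le_compat_r.
      left; apply Rinv_0_lt_compat, pow2_pos. apply Hj; lia.
    - rewrite sum_geo_eta. pose proof (pow2_pos (S N)).
      assert (0 < / 2 ^ S N) by (apply Rinv_0_lt_compat; lra). nra. }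
  assert (Series (fun k => t (S N + k)%nat) <= / 2 ^ S N).
  { eapply Rle_trans. apply (Series_le _ (fun k => / 2 ^ S k * / 2 ^ S N)).
    - intro k. destruct (t_bounds (S N + k)). split; auto.
      replace (/ 2 ^ S k * / 2 ^ S N) with (/ 2 ^ S (S N + k)); auto.
      rewrite <- Rinv_mult, <- pow_add. f_equal. f_equal. lia.
    - apply ex_series_scal_r, ex_half_S.
    - rewrite Series_scal_r, Series_half_S. lra. }
  lra.
Qed.
End Ser.

Lemma finite_min {A : Type} (l : list A) (Q : A -> R -> Prop) :
  (forall a r r', Q a r -> 0 < r' -> r' <= r -> Q a r') ->
  (forall a, In a l -> exists r, 0 < r /\ Q a r) ->
  exists t, 0 < t /\ forall a, In a l -> Q a t.
Proof.
  intros Hm. induction l as [|b l IH]; intro H.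
  - exists 1. split. lra. intros a [].
  - destruct (H b (or_introl eq_refl)) as [rb [Hrb Qb]].
    destruct IH as [t [Ht Qt]]. { intros a Ha. apply H. right; exact Ha. }
    exists (Rmin rb t). split. apply Rmin_pos; auto.
    intros a [<-|Ha].
    + apply (Hm _ rb); auto. apply Rmin_pos; auto. apply Rmin_l.
    + apply (Hm _ t); auto. apply Rmin_pos; auto. apply Rmin_r.
Qed.

Section Main.
Variable X : Type.
Variable d : X -> X -> R.
Variable F : X -> X -> Prop.
Hypothesis Hd : is_metric d.

Lemma d_pos x y : 0 <= d x y. Proof. apply (proj1 Hd). Qed.
Lemma d_refl x : d x x = 0. Proof. apply (proj1 (proj2 Hd)). reflexivity. Qed.
Lemma d_sym x y : d x y = d y x. Proof. apply (proj1 (proj2 (proj2 Hd))). Qed.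
Lemma d_tri x y z : d x z <= d x y + d y z. Proof. apply (proj2 (proj2 (proj2 Hd))). Qed.

Lemma ball_open c r : mopen d (fun y => d c y < r).
Proof.
  intros y Hy. exists (r - d c y). split. lra.
  intros y' Hy'. pose proof (d_tri c y y'). lra.
Qed.

Lemma union_balls_open (P : X -> Prop) r : mopen d (fun y => exists i, P i /\ d i y < r).
Proof.
  intros y [i [Pi Hy]]. exists (r - d i y). split. lra.
  intros y' Hy'. exists i. split; auto. pose proof (d_tri i y y'). lra.
Qed.

Hypothesis Hc : compact_space d.
Hypothesis Hv : values_in_2X d F.
Hypothesis Hcont : sv_continuous d F.

Lemma local_ulsc eta : 0 < eta -> forall x, exists t, 0 < t /\
  forall x1 x2, d x x1 < t -> d x x2 < t -> forall a, F x1 a ->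
  exists a', F x2 a' /\ d a a' < eta.
Proof.
  intros He x. set (e := eta / 4).
  destruct (proj2 (Hv x) X (fun a y => F x a /\ d a y < e)) as [l Hl].
  { intros a y [Fa Hy]. exists (e - d a y). split. lra.
    intros y' Hy'. split; auto. pose proof (d_tri a y y'). lra. }
  { intros y Fy. exists y. split; auto. rewrite d_refl. unfold e; lra. }
  destruct (proj1 Hcont x (fun y => exists i, (In i l /\ F x i) /\ d i y < e)) as [s [Hs Hsu]].
  { apply union_balls_open. }
  { intros y Fy. destruct (Hl y Fy) as [i [Il [Fi Hi]]]. exists i. auto. }
  destruct (finite_min l (fun i r => F x i -> forall x', d x x' < r ->
       exists y, F x' y /\ d i y < e)) as [r [Hr Hrl]].
  { intros i r r' Q Hr' Hle Fi x' Hx'. apply Q; auto. lra. }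
  { intros i _. destruct (classic (F x i)) as [Fi|nFi].
    - destruct (proj2 Hcont x (fun y => d i y < e)) as [eps [Heps Hl2]].
      + apply ball_open.
      + exists i. split; auto. rewrite d_refl. unfold e; lra.
      + exists eps. split; auto.
    - exists 1. split. lra. intro; contradiction. }
  exists (Rmin s r). split. apply Rmin_pos; auto.
  intros x1 x2 H1 H2 a Fa.
  destruct (Hsu x1 (Rlt_le_trans _ _ _ H1 (Rmin_l _ _)) a Fa) as [i [[Il Fi] Hi]].
  destruct (Hrl i Il Fi x2 (Rlt_le_trans _ _ _ H2 (Rmin_r _ _))) as [y [Fy Hy]].
  exists y. split; auto. pose proof (d_tri a i y). rewrite (d_sym a i) in H. unfold e in *. lra.
Qed.

Lemma ulsc eta : 0 < eta -> exists rho0, 0 < rho0 /\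
  forall x1 x2, d x1 x2 < rho0 -> forall a, F x1 a ->
  exists a', F x2 a' /\ d a a' < eta.
Proof.
  intro He.
  destruct (functional_choice _ (local_ulsc eta He)) as [T HT].
  destruct (Hc X (fun x y => d x y < T x / 2)) as [l Hl].
  { intro; apply ball_open. }
  { intros y _. exists y. rewrite d_refl. pose proof (proj1 (HT y)). lra. }
  destruct (finite_min l (fun x r => r <= T x / 2)) as [t [Ht Htl]].
  { intros; lra. }
  { intros x _. exists (T x / 2). pose proof (proj1 (HT x)). split; lra. }
  exists t. split; auto. intros x1 x2 H12 a Fa.
  destruct (Hl x1 I) as [x [Il Hx]].
  specialize (Htl x Il). pose proof (d_tri x x1 x2).
  apply (proj2 (HT x) x1 x2); auto; lra.
Qed.

Hypothesis Hdiam : diameter_one d.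
Variable pre : X -> X.
Hypothesis Hpre : forall x, F (pre x) x.

Lemma d_le1 x y : d x y <= 1.
Proof. apply (proj1 Hdiam). exists x, y. reflexivity. Qed.

Lemma rho_ge (z w : Orb_inv F) j :
  d (proj1_sig z j) (proj1_sig w j) / 2 ^ S j <= rho d F z w.
Proof.
  unfold rho. apply (R1 (fun n => d (proj1_sig z n) (proj1_sig w n))).
  intro n; split; [apply d_pos | apply d_le1].
Qed.

Lemma rho_le (z w : Orb_inv F) eta N : 0 <= eta ->
  (forall j, (j <= N)%nat -> d (proj1_sig z j) (proj1_sig w j) <= eta) ->
  rho d F z w <= eta + / 2 ^ S N.
Proof.
  intros He H. unfold rho. apply (R2 (fun n => d (proj1_sig z n) (proj1_sig w n))); auto.
  intro n; split; [apply d_pos | apply d_le1].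
Qed.

Definition back (p : X) (m : nat) : X := Nat.iter m pre p.

Lemma back_F p m : F (back p (S m)) (back p m).
Proof. simpl. apply Hpre. Qed.

Definition g (c : nat -> X) (M j : nat) : X :=
  if Nat.leb j M then c (M - j)%nat else back (c 0%nat) (j - M).

Lemma g_low c M j : (j <= M)%nat -> g c M j = c (M - j)%nat.
Proof. intro H. unfold g. rewrite (proj2 (Nat.leb_le _ _) H). reflexivity. Qed.

Lemma g_high c M j : (M < j)%nat -> g c M j = back (c 0%nat) (j - M).
Proof. intro H. unfold g. rewrite (proj2 (Nat.leb_gt _ _) H). reflexivity. Qed.

Lemma g_0 c M : g c M 0 = c M.
Proof. rewrite g_low by lia. f_equal. lia. Qed.

Lemma g_shift c M j : g c (S M) (S j) = g c M j.
Proof. reflexivity. Qed.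

Lemma g_orb c M : (forall t, (t < M)%nat -> F (c t) (c (S t))) ->
  forall j, F (g c M (S j)) (g c M j).
Proof.
  intros H j. destruct (Nat.lt_ge_cases j M) as [h|h].
  - rewrite !g_low by lia. replace (M - j)%nat with (S (M - S j)) by lia.
    apply H. lia.
  - destruct (Nat.eq_dec j M) as [->|h'].
    + rewrite g_high by lia. rewrite g_low by lia. rewrite Nat.sub_diag.
      replace (S M - M)%nat with 1%nat by lia. apply (back_F _ 0).
    + rewrite !g_high by lia. replace (S j - M)%nat with (S (j - M)) by lia. apply back_F.
Qed.

Lemma exists_N e : 0 < e -> exists N, / 2 ^ S N < e.
Proof.
  intro He. destruct (archimed_cor1 e He) as [N [HN HN0]]. exists N.
  assert (INR N <= 2 ^ S N).
  { clear. induction N. simpl; lra. rewrite S_INR. change (2 ^ S (S N)) with (2 * 2 ^ S N).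
    pose proof (pow2_pos (S N)). assert (1 <= 2 ^ S N).
    { apply pow_R1_Rle. lra. } lra. }
  assert (0 < INR N) by (apply lt_0_INR; lia).
  eapply Rle_lt_trans; [|exact HN]. apply Rinv_le_contravar; auto.
Qed.

Lemma pow2_mono a b : (a <= b)%nat -> 2 ^ a <= 2 ^ b.
Proof. intro. apply Rle_pow; auto; lra. Qed.


Lemma dir1 : shadowing d F -> shadowing (rho d F) (F_inv F).
Proof.
  intros shF eps Heps.
  destruct (exists_N (eps / 4)) as [N HN]; [lra|].
  destruct (shF (eps / 4)) as [d1 [Hd1 Sh1]]; [lra|].
  pose proof (pow2_pos (S (S N))) as HP.
  set (K := 2 ^ S (S N)) in *.
  exists (Rmin (d1 / 2) (eps / (4 * K))). split.
  { apply Rmin_pos. lra. apply Rdiv_lt_0_compat; lra. }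
  set (de := Rmin (d1 / 2) (eps / (4 * K))).
  assert (Hde : 0 < de) by (apply Rmin_pos; [lra | apply Rdiv_lt_0_compat; lra]).
  intros z Hz.
  assert (P0 : forall k, exists a0, F (proj1_sig (z k) 0%nat) a0 /\
             d (proj1_sig (z (S k)) 0%nat) a0 < 2 * de).
  { intro k. destruct (Hz k) as [a [[Fa _] Ha]].
    exists (proj1_sig a 0%nat). split; auto. pose proof (rho_ge (z (S k)) a 0%nat).
    simpl in H. lra. }
  assert (P1 : forall k j, d (proj1_sig (z (S k)) (S j)) (proj1_sig (z k) j)
                 < 2 ^ S (S j) * de).
  { intros k j. destruct (Hz k) as [a [[_ Ea] Ha]].
    pose proof (rho_ge (z (S k)) a (S j)). rewrite Ea in H.
    pose proof (pow2_pos (S (S j))).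
    apply (Rmult_lt_reg_r (/ 2 ^ S (S j))). apply Rinv_0_lt_compat; lra.
    replace (2 ^ S (S j) * de * / 2 ^ S (S j)) with de by (field; lra). lra. }
  set (v := fun i => proj1_sig (z (i - N)%nat) (N - i)%nat).
  assert (Hv1 : pseudo_orbit d F d1 v).
  { intro i. destruct (Nat.lt_ge_cases i N) as [h|h].
    - exists (v (S i)). split.
      + unfold v. replace (i - N)%nat with 0%nat by lia. replace (S i - N)%nat with 0%nat by lia.
        replace (N - i)%nat with (S (N - S i)) by lia. apply (proj2_sig (z 0%nat)).
      + rewrite d_refl. lra.
    - destruct (P0 (i - N)%nat) as [a0 [Fa0 Ha0]]. exists a0. split.
      + unfold v. replace (N - i)%nat with 0%nat by lia. exact Fa0.
      + unfold v. replace (S i - N)%nat with (S (i - N)) by lia.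
        replace (N - S i)%nat with 0%nat by lia.
        assert (de <= d1 / 2) by apply Rmin_l. lra. }
  destruct (Sh1 v Hv1) as [w [Ow Hw]].
  assert (Chain : forall j k, d (proj1_sig (z k) j) (proj1_sig (z (k - j)%nat) (j - k)%nat)
                    <= 2 ^ S (S j) * de).
  { induction j; intro k.
    - rewrite Nat.sub_0_r, Nat.sub_0_l, d_refl. pose proof (pow2_pos 2). nra.
    - destruct k as [|k].
      + rewrite Nat.sub_0_l, Nat.sub_0_r, d_refl. pose proof (pow2_pos (S (S (S j)))). nra.
      + simpl Nat.sub. pose proof (d_tri (proj1_sig (z (S k)) (S j)) (proj1_sig (z k) j)
          (proj1_sig (z (k - j)%nat) (j - k)%nat)).
        specialize (P1 k j). specialize (IHj k).
        change (2 ^ S (S (S j))) with (2 * 2 ^ S (S j)). lra. }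
  set (W := fun k => exist (fun x => forall n, F (x (S n)) (x n))
             (g w (k + N)) (g_orb w (k + N) (fun t _ => Ow t)) : Orb_inv F).
  exists W. split.
  - intro k. split.
    + simpl. rewrite !g_0. apply Ow.
    + intro n. reflexivity.
  - intro k. eapply Rle_lt_trans.
    + apply (rho_le _ _ (K * de + eps / 4) N).
      * pose proof (Rmult_le_pos K de). lra.
      * intros j Hj. simpl. rewrite g_low by lia.
        pose proof (Chain j k).
        specialize (Hw (k + N - j)%nat). unfold v in Hw.
        replace (k + N - j - N)%nat with (k - j)%nat in Hw by lia.
        replace (N - (k + N - j))%nat with (j - k)%nat in Hw by lia.
        pose proof (d_tri (proj1_sig (z k) j) (proj1_sig (z (k - j)%nat) (j - k)%nat)
          (w (k + N - j)%nat)).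
        assert (2 ^ S (S j) <= K) by (apply pow2_mono; lia).
        assert (2 ^ S (S j) * de <= K * de) by (apply Rmult_le_compat_r; lra).
        lra.
    + assert (de <= eps / (4 * K)) by apply Rmin_r.
      assert (K * de <= eps / 4).
      { apply (Rmult_le_compat_l K) in H; [|lra].
        replace (K * (eps / (4 * K))) with (eps / 4) in H by (field; lra). exact H. }
      lra.
Qed.


Lemma track L : forall th, 0 < th -> exists de, 0 < de /\
  forall y, pseudo_orbit d F de y -> forall s, exists c : nat -> X,
    c 0%nat = y s /\ (forall t, (t < L)%nat -> F (c t) (c (S t))) /\
    (forall t, (t <= L)%nat -> d (c t) (y (s + t)%nat) < th).
Proof.
  induction L as [|L IH]; intros th Hth.
  - exists 1. split. lra. intros y _ s. exists (fun _ => y s). split; auto. split.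
    + intros t Ht. lia.
    + intros t Ht. replace (s + t)%nat with s by lia. rewrite d_refl. exact Hth.
  - destruct (ulsc (th / 2)) as [r [Hr Hu]]; [lra|].
    destruct (IH (Rmin th r)) as [de' [Hde' Hi]]. { apply Rmin_pos; auto. }
    exists (Rmin de' (th / 2)). split. { apply Rmin_pos; lra. }
    intros y Hy s.
    destruct (Hi y) with (s := s) as [c [c0 [cF cd]]].
    { intro n. destruct (Hy n) as [a [Fa Ha]]. exists a. split; auto.
      pose proof (Rmin_l de' (th / 2)). lra. }
    destruct (Hy (s + L)%nat) as [a [Fa Ha]].
    assert (Hcl := cd L (le_n _)).
    destruct (Hu (y (s + L)%nat) (c L)) with (a := a) as [a' [Fa' Ha']]; auto.
    { rewrite d_sym. pose proof (Rmin_r th r). lra. }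
    exists (fun t => if Nat.leb t L then c t else a'). split; [|split].
    + simpl. exact c0.
    + intros t Ht. destruct (Nat.lt_ge_cases t L) as [h|h].
      * rewrite (proj2 (Nat.leb_le t L)) by lia. rewrite (proj2 (Nat.leb_le (S t) L)) by lia. auto.
      * replace t with L by lia. rewrite Nat.leb_refl.
        rewrite (proj2 (Nat.leb_gt (S L) L)) by lia. exact Fa'.
    + intros t Ht. destruct (Nat.le_gt_cases t L) as [h|h].
      * rewrite (proj2 (Nat.leb_le t L)) by lia. pose proof (cd t h). pose proof (Rmin_l th r). lra.
      * rewrite (proj2 (Nat.leb_gt t L)) by lia. replace (s + t)%nat with (S (s + L)) by lia.
        pose proof (d_tri a' a (y (S (s + L)))). rewrite (d_sym a' a) in H.
        rewrite (d_sym a (y (S (s + L)))) in H. pose proof (Rmin_r de' (th / 2)). lra.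
Qed.

Lemma dir2 : shadowing (rho d F) (F_inv F) -> shadowing d F.
Proof.
  intros shI eps Heps.
  destruct (shI (eps / 4)) as [dI [HdI ShI]]; [lra|].
  destruct (exists_N (dI / 4)) as [N HN]; [lra|].
  set (th := Rmin (dI / 4) (eps / 2)).
  assert (Hth : 0 < th) by (apply Rmin_pos; lra).
  destruct (track (S N) th Hth) as [de [Hde Htr]].
  exists de. split; auto. intros x Hx.
  set (y := fun t => if Nat.leb N t then x (t - N)%nat else back (x 0%nat) (N - t)).
  assert (y1 : forall t, (N <= t)%nat -> y t = x (t - N)%nat).
  { intros t h. unfold y. rewrite (proj2 (Nat.leb_le _ _) h). reflexivity. }
  assert (y2 : forall t, (t < N)%nat -> y t = back (x 0%nat) (N - t)).
  { intros t h. unfold y. rewrite (proj2 (Nat.leb_gt _ _) h). reflexivity. }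
  assert (Hy : pseudo_orbit d F de y).
  { intro t. destruct (Nat.lt_ge_cases t N) as [h|h].
    - exists (y (S t)). split.
      + rewrite (y2 t h). destruct (Nat.eq_dec (S t) N) as [e|e].
        * rewrite y1 by lia. replace (S t - N)%nat with 0%nat by lia.
          replace (N - t)%nat with 1%nat by lia. apply (back_F _ 0).
        * rewrite y2 by lia. replace (N - t)%nat with (S (N - S t)) by lia. apply back_F.
      + rewrite d_refl. exact Hde.
    - rewrite (y1 t h), (y1 (S t)) by lia. replace (S t - N)%nat with (S (t - N)) by lia.
      apply Hx. }
  destruct (functional_choice _ (Htr y Hy)) as [C HC].
  assert (CF : forall k t, (t < S N)%nat -> F (C k t) (C k (S t))).
  { intros k t h. apply (proj1 (proj2 (HC k))). exact h. }
  set (z := fun k => exist (fun x => forall n, F (x (S n)) (x n))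
             (g (C k) N) (g_orb (C k) N (fun t h => CF k t (Nat.lt_lt_succ_r _ _ h))) : Orb_inv F).
  set (a := fun k => exist (fun x => forall n, F (x (S n)) (x n))
             (g (C k) (S N)) (g_orb (C k) (S N) (CF k)) : Orb_inv F).
  assert (Hz : pseudo_orbit (rho d F) (F_inv F) dI z).
  { intro k. exists (a k). split.
    - split.
      + simpl. rewrite !g_0. apply CF. lia.
      + intro n. reflexivity.
    - eapply Rle_lt_trans.
      + apply (rho_le _ _ (dI / 2) N). lra.
        intros j Hj. simpl. rewrite !g_low by lia.
        pose proof (proj2 (proj2 (HC (S k))) (N - j)%nat ltac:(lia)).
        pose proof (proj2 (proj2 (HC k)) (S N - j)%nat ltac:(lia)).
        replace (k + (S N - j))%nat with (S k + (N - j))%nat in H0 by lia.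
        pose proof (d_tri (C (S k) (N - j)%nat) (y (S k + (N - j))%nat) (C k (S N - j)%nat)).
        rewrite (d_sym (y _) (C k _)) in H1.
        pose proof (Rmin_l (dI / 4) (eps / 2)). fold th in H2. lra.
      + lra. }
  destruct (ShI z Hz) as [W [OW HW]].
  exists (fun k => proj1_sig (W k) 0%nat). split.
  - intro k. apply (proj1 (OW k)).
  - intro k. pose proof (rho_ge (z k) (W k) 0%nat). simpl in H. rewrite g_0 in H.
    specialize (HW k).
    pose proof (proj2 (proj2 (HC k)) N ltac:(lia)).
    rewrite (y1 (k + N)%nat) in H0 by lia. replace (k + N - N)%nat with k in H0 by lia.
    pose proof (d_tri (x k) (C k N) (proj1_sig (W k) 0%nat)).
    rewrite (d_sym (x k) (C k N)) in H1.
    pose proof (Rmin_r (dI / 4) (eps / 2)). fold th in H2. lra.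
Qed.

End Main.

Theorem mainTheorem12 (X : Type) (d : X -> X -> R) (F : X -> X -> Prop) :
  is_metric d -> diameter_one d -> compact_space d ->
  values_in_2X d F -> sv_continuous d F -> sv_onto F ->
  (shadowing d F <-> shadowing (rho d F) (F_inv F)).
Proof.
  intros Hd Hdiam Hc Hv Hcont Hon.
  destruct (functional_choice (fun y x => F x y) Hon) as [pre Hpre].
  split.
  - apply (dir1 X d F Hd Hdiam pre Hpre).
  - apply (dir2 X d F Hd Hc Hv Hcont Hdiam pre Hpre).
Qed.
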